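(* Let $G$ be a group and $A$ an additive abelian group with a right $G$-action by group automorphisms. For every $n\in\mathbb Z_+$, $a\in A$ and $g_1,\dots,g_{n+1}\in G$, $$[D^{n+1}a](g_1,g_2,\dots,g_{n+1})=[D^n(a^{g_1})](g_2,\dots,g_{n+1})-[D^na](g_2,\dots,g_{n+1}).$$
   Context: Right action: $a\mapsto a^g$, $a^{\mathbf e}=a$, $(a^g)^h=a^{gh}$, additive in $a$; $\mathbf e$ is the identity of $G$. $\mathcal C^0(G,A)=A$; for $n\ge1$, $\mathcal C^n(G,A)$ consists of functions $G^n\to A$ vanishing whenever some argument is $\mathbf e$. For $n\ge1$, $(d_nc)(g_1,\dots,g_n)=[c(g_1,\dots,g_{n-1})]^{g_n}-c(g_1,\dots,g_{n-1})$; $D^0=\mathrm{id}_A$, $D^n=d_nD^{n-1}$ (so for $n=0$ the formula reads $[D^1a](g_1)=a^{g_1}-a$). *)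

(* Defs.v *)
From HB Require Import structures.
From mathcomp Require Import all_boot all_order all_algebra.
Set Implicit Arguments. Unset Strict Implicit. Unset Printing Implicit Defensive.
Import GRing.Theory.
Local Open Scope ring_scope.

(* An element of G^n is a function 'I_n -> G, the i-th
   argument g_{i+1} being g i. *)

Definition dcob (G : Type) (A : zmodType) (act : A -> G -> A) (n : nat)
  (c : ('I_n -> G) -> A) : ('I_n.+1 -> G) -> A :=
  fun g => let c0 := c (fun i => g (widen_ord (leqnSn n) i)) in
           act c0 (g ord_max) - c0.

Fixpoint Dcob (G : Type) (A : zmodType) (act : A -> G -> A) (n : nat)
  : A -> ('I_n -> G) -> A :=
  match n with
  | 0 => fun a _ => a
  | m.+1 => fun a => @dcob G A act m (@Dcob G A act m a)
  end.

Definition is_group (G : Type) (mul : G -> G -> G) (e : G) (inv : G -> G) :=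
  [/\ forall x y z, mul x (mul y z) = mul (mul x y) z,
      forall x, mul e x = x, forall x, mul x e = x,
      forall x, mul (inv x) x = e & forall x, mul x (inv x) = e].

Definition is_right_action (G : Type) (mul : G -> G -> G) (e : G)
  (A : zmodType) (act : A -> G -> A) :=
  [/\ forall a, act a e = a,
      forall a g h, act (act a g) h = act a (mul g h) &
      forall g a b, act (a + b) g = act a g + act b g].

(* Main.v *)
Require Import Defs.
From mathcomp Require Import all_boot all_order all_algebra.
Import GRing.Theory.
Local Open Scope ring_scope.

Lemma Dcob_ext (G : Type) (A : zmodType) (act : A -> G -> A) n a (f h : 'I_n -> G) :
  (forall i, f i = h i) -> @Dcob G A act n a f = @Dcob G A act n a h.
Proof.
elim: n a f h => [|n IH] a f h E //=.
rewrite /dcob E (IH a _ (fun i => h (widen_ord (leqnSn n) i))) //.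
Qed.

Theorem lemma1p6 (G : Type) (mul : G -> G -> G) (e : G) (inv : G -> G)
  (A : zmodType) (act : A -> G -> A)
  (HG : is_group mul e inv) (Hact : is_right_action mul e act)
  (n : nat) (a : A) (g : 'I_n.+1 -> G) :
  @Dcob G A act n.+1 a g =
    @Dcob G A act n (act a (g ord0)) (fun i => g (lift ord0 i))
    - @Dcob G A act n a (fun i => g (lift ord0 i)).
Proof.
case: Hact => _ _ Hadd.
have actB : forall x y t, act (x - y) t = act x t - act y t.
  move=> x y t.
  have H0 : act 0 t = 0.
    have : act 0 t + act 0 t = act 0 t + 0 by rewrite addr0 -Hadd addr0.
    by move/addrI.
  have HN : act (- y) t = - act y t.
    by apply/eqP; rewrite -addr_eq0 -Hadd addNr H0.
  by rewrite Hadd HN.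
elim: n a g => [|n IH] a g.
  rewrite /= /dcob /=.
  by have -> : (ord_max : 'I_1) = ord0 by apply: val_inj.
have DS : forall m b (h : 'I_m.+1 -> G), @Dcob G A act m.+1 b h =
    act (@Dcob G A act m b (fun i => h (widen_ord (leqnSn m) i))) (h ord_max)
    - @Dcob G A act m b (fun i => h (widen_ord (leqnSn m) i)) by [].
rewrite (DS n.+1 a g) IH actB (DS n (act a (g ord0))) (DS n a).
have E1 : forall i : 'I_n, g (widen_ord (leqnSn n.+1) (lift ord0 i)) =
    g (lift ord0 (widen_ord (leqnSn n) i)).
  by move=> i; congr g; apply: val_inj.
have E0 : g (widen_ord (leqnSn n.+1) ord0) = g ord0 by congr g; apply: val_inj.
have Em : g ord_max = g (lift ord0 ord_max) by congr g; apply: val_inj.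
rewrite E0 -Em.
rewrite (@Dcob_ext G A act n a _ _ E1) (@Dcob_ext G A act n (act a (g ord0)) _ _ E1).
set X := act _ (g ord_max); set Y := act _ (g ord_max).
set Z := Dcob _ _ _; set W := Dcob _ _ _.
rewrite !opprB !addrA.
rewrite -!addrA addrCA [RHS]addrCA.
rewrite addrCA [RHS]addrCA; congr (_ + _).
rewrite addrCA [RHS]addrCA; congr (_ + _); exact: addrC.
Qed.
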